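(* Let $f:D'^X\to\mathbb{R}$ be a function and let $(G,c)$ be a $k$-submodular $(X,k)$-network that represents $f$. Then an assignment $\phi:X\to D'$ is an extreme minimum solution of $f$ if and only if its corresponding cut $S_\phi$ is an extreme minimum cut.
   Context: $D=\{1,\dots,k\}$, $D'=\{0\}\cup D$. For $v\in X$ let $X_v=\{v_i:i\in D\}$. An $(X,k)$-network is a directed network with nonnegative capacities $c$ on the vertex set $\bigcup_{v\in X}X_v\cup\{s,t\}$; an $s$-$t$ cut is a vertex set $S$ with $s\in S$, $t\notin S$, of capacity $c(S)$ = total capacity of edges leaving $S$. For $\phi:X\to D'$, $S_\phi=\{s\}\cup\{v_{\phi(v)}:v\in X,\phi(v)\ne0\}$. An $s$-$t$ cut is normalised if it contains at most one vertex of each $X_v$. For an $s$-$t$ cut $S$, $\nu(S)=\{s\}\cup\{v_i: v\in X, S\cap X_v=\{v_i\}\}$. The network represents $f$ if $c(S_\phi)=f(\phi)$ for every $\phi$, and is $k$-submodular if $c(S)\ge c(\nu(S))$ for every $s$-$t$ cut $S$. A minimum solution $x$ of $f$ is dominated by a minimum solution $y$ if $x\ne y$ and $x_i\ne0\Rightarrow x_i=y_i$ for all $i$; it is extreme if not dominated. A normalised minimum cut $S$ is dominated by a normalised minimum cut $S'$ if $S\subsetneq S'$; it is an extreme minimum cut if not dominated. *)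

(* Defs.v *)
From mathcomp Require Import all_boot all_order all_algebra.
Set Implicit Arguments. Unset Strict Implicit. Unset Printing Implicit Defensive.
Import Order.TTheory GRing.Theory Num.Theory.
Local Open Scope ring_scope.

(* Vertices of an (X,k)-network: inl true = s, inl false = t,
   inr (v, i) = v_{i+1} (i : 'I_k encodes the label i+1 of D = {1..k}). *)
Definition vert (X : finType) (k : nat) : finType := (bool + (X * 'I_k))%type.

Definition src {X : finType} {k : nat} : vert X k := inl true.
Definition snk {X : finType} {k : nat} : vert X k := inl false.
Definition node {X : finType} {k : nat} (v : X) (i : 'I_k) : vert X k := inr (v, i).

Definition Xv {X : finType} {k : nat} (v : X) : {set vert X k} :=
  [set x : vert X k | [exists i : 'I_k, x == node v i]].

(* D' = {0,..,k} is 'I_k.+1; label i+1 of D corresponds to lift ord0 i. *)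
Definition assignment (X : finType) (k : nat) := {ffun X -> 'I_k.+1}.

(* A network: nonnegative capacities on all ordered pairs of vertices
   (capacity 0 = no edge). *)
Definition nonneg_cap {R : realFieldType} {X : finType} {k : nat}
  (c : vert X k -> vert X k -> R) := forall u w, 0 <= c u w.

Definition is_st_cut {X : finType} {k : nat} (S : {set vert X k}) :=
  (src \in S) /\ (snk \notin S).

Definition cut_cap {R : realFieldType} {X : finType} {k : nat}
  (c : vert X k -> vert X k -> R) (S : {set vert X k}) : R :=
  \sum_(u in S) \sum_(w in ~: S) c u w.

Definition S_of {X : finType} {k : nat} (phi : assignment X k) : {set vert X k} :=
  src |: [set x : vert X k | [exists v : X, exists i : 'I_k,
          (x == node v i) && (phi v == lift ord0 i)]].

Definition normalised {X : finType} {k : nat} (S : {set vert X k}) :=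
  forall v : X, (#|S :&: Xv v| <= 1)%N.

Definition nu {X : finType} {k : nat} (S : {set vert X k}) : {set vert X k} :=
  src |: [set x : vert X k | [exists v : X, exists i : 'I_k,
          (x == node v i) && (S :&: Xv v == [set node v i])]].

Definition represents {R : realFieldType} {X : finType} {k : nat}
  (c : vert X k -> vert X k -> R) (f : assignment X k -> R) :=
  forall phi, cut_cap c (S_of phi) = f phi.

Definition k_submodular_net {R : realFieldType} {X : finType} {k : nat}
  (c : vert X k -> vert X k -> R) :=
  forall S, is_st_cut S -> cut_cap c (nu S) <= cut_cap c S.

Definition min_solution {R : realFieldType} {X : finType} {k : nat}
  (f : assignment X k -> R) (x : assignment X k) :=
  forall y, f x <= f y.

Definition dominated_by {X : finType} {k : nat} (x y : assignment X k) :=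
  x <> y /\ forall v, x v != ord0 -> x v = y v.

Definition extreme_min_solution {R : realFieldType} {X : finType} {k : nat}
  (f : assignment X k -> R) (x : assignment X k) :=
  min_solution f x /\ ~ exists y, min_solution f y /\ dominated_by x y.

Definition min_cut {R : realFieldType} {X : finType} {k : nat}
  (c : vert X k -> vert X k -> R) (S : {set vert X k}) :=
  is_st_cut S /\ forall S', is_st_cut S' -> cut_cap c S <= cut_cap c S'.

Definition normalised_min_cut {R : realFieldType} {X : finType} {k : nat}
  (c : vert X k -> vert X k -> R) (S : {set vert X k}) :=
  min_cut c S /\ normalised S.

Definition extreme_min_cut {R : realFieldType} {X : finType} {k : nat}
  (c : vert X k -> vert X k -> R) (S : {set vert X k}) :=
  normalised_min_cut c S /\
  ~ exists S', normalised_min_cut c S' /\ S \proper S'.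

(* Main.v *)
Require Import Defs.
From mathcomp Require Import all_boot all_order all_algebra.
Local Open Scope ring_scope.
Set Implicit Arguments. Unset Strict Implicit.

Lemma in_S_of (X : finType) (k : nat) (phi : assignment X k) (x : vert X k) :
  (x \in S_of phi) = match x with inl b => b | inr (v, i) => phi v == lift ord0 i end.
Proof.
rewrite /S_of !inE; case: x => [b|[v i]].
  case: b => //=; apply/existsP => -[v]; by case/existsP.
apply/existsP/idP => [[w /existsP [j /andP [/eqP [-> ->]]]] //|H].
by exists v; apply/existsP; exists i; rewrite eqxx.
Qed.

Lemma in_nu (X : finType) (k : nat) (S : {set vert X k}) (x : vert X k) :
  (x \in nu S) = match x with inl b => b | inr (v, i) => S :&: Xv v == [set node v i] end.
Proof.
rewrite /nu !inE; case: x => [b|[v i]].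
  case: b => //=; apply/existsP => -[v]; by case/existsP.
apply/existsP/idP => [[w /existsP [j /andP [/eqP [-> ->]]]] //|H].
by exists v; apply/existsP; exists i; rewrite eqxx.
Qed.

Lemma in_Xv (X : finType) (k : nat) (v : X) (x : vert X k) :
  (x \in Xv v) = match x with inl _ => false | inr (w, _) => w == v end.
Proof.
rewrite /Xv inE; case: x => [b|[w i]].
  by apply/existsP => -[j].
apply/existsP/eqP => [[j /eqP [->]] //|->]; by exists i.
Qed.

Lemma nu_S_of (X : finType) (k : nat) (S : {set vert X k}) :
  exists psi : assignment X k, nu S = S_of psi.
Proof.
exists [ffun v => if [pick i | S :&: Xv v == [set node v i]] is Some i
                  then lift ord0 i else ord0].
apply/setP => x; rewrite in_nu in_S_of; case: x => [b|[v i]] //.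
rewrite ffunE; case: pickP => [j /eqP Hj|Hn].
  rewrite Hj (inj_eq lift_inj); apply/eqP/eqP => [H|->] //.
  have : node v j \in [set node v i] by rewrite -H set11.
  by rewrite inE => /eqP [->].
by rewrite Hn (negbTE (neq_lift _ _)).
Qed.

Lemma nu_id (X : finType) (k : nat) (S : {set vert X k}) :
  is_st_cut S -> normalised S -> nu S = S.
Proof.
move=> [Hs Ht] Hn; apply/setP => x; rewrite in_nu.
case: x => [[]|[v i]] //; first by apply/esym/negbTE.
rewrite eq_sym eqEcard sub1set cards1 (Hn v) andbT inE in_Xv /= eqxx andbT.
by [].
Qed.

Lemma S_of_st (X : finType) (k : nat) (phi : assignment X k) : is_st_cut (S_of phi).
Proof. by split; rewrite in_S_of. Qed.

Lemma S_of_norm (X : finType) (k : nat) (phi : assignment X k) : normalised (S_of phi).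
Proof.
move=> v; case: (unliftP ord0 (phi v)) => [j Hj|Hj].
  apply: (leq_trans _ (eq_leq (cards1 (node v j)))).
  apply: subset_leq_card; apply/subsetP => x; rewrite in_setI in_S_of in_Xv.
  case: x => [b|[w i]]; first by rewrite andbF.
  case/andP => /eqP H /eqP Hw; subst w.
  by rewrite Hj in H; rewrite inE (lift_inj H).
rewrite leq_eqVlt; apply/orP; right; rewrite ltnS leqn0 cards_eq0.
apply/eqP/setP => x; rewrite in_setI in_S_of in_Xv in_set0.
case: x => [b|[w i]]; first by rewrite andbF.
apply/negbTE; apply/negP => /andP [/eqP H /eqP Hw]; subst w.
by move: (neq_lift (@ord0 k) i); rewrite -H Hj eqxx.
Qed.

Lemma S_of_sub (X : finType) (k : nat) (phi psi : assignment X k) :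
  S_of phi \subset S_of psi <-> forall v, phi v != ord0 -> phi v = psi v.
Proof.
split => [/subsetP H v|H].
  case: (unliftP ord0 (phi v)) => [j Hj|->]; last by rewrite eqxx.
  move=> _; have := H (node v j); rewrite !in_S_of /= Hj eqxx => /(_ isT) /eqP ->.
  by [].
apply/subsetP => x; rewrite !in_S_of; case: x => [b|[v i]] // /eqP Hv.
rewrite -H ?Hv // eq_sym neq_lift.
Qed.

Lemma S_of_inj (X : finType) (k : nat) (phi psi : assignment X k) :
  S_of phi = S_of psi -> phi = psi.
Proof.
move=> E.
have H1 : S_of phi \subset S_of psi by rewrite E.
have H2 : S_of psi \subset S_of phi by rewrite E.
move/S_of_sub: H1 => H1; move/S_of_sub: H2 => H2.
apply/ffunP => v.
case: (eqVneq (phi v) ord0) => Hp; last exact: H1.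
case: (eqVneq (psi v) ord0) => Hq; first by rewrite Hp Hq.
by rewrite (H2 v Hq).
Qed.

Lemma domE (X : finType) (k : nat) (phi psi : assignment X k) :
  dominated_by phi psi <-> S_of phi \proper S_of psi.
Proof.
rewrite properEneq; split.
  move=> [Hne Hd]; apply/andP; split; last by apply/S_of_sub.
  by apply/eqP => /S_of_inj.
move/andP => [Hne /S_of_sub Hd]; split => // E.
by move: Hne; rewrite E eqxx.
Qed.

Theorem lemma17 (R : realFieldType) (X : finType) (k : nat)
  (f : assignment X k -> R) (c : vert X k -> vert X k -> R) :
  nonneg_cap c -> k_submodular_net c -> represents c f ->
  forall phi : assignment X k,
    extreme_min_solution f phi <-> extreme_min_cut c (S_of phi).
Proof.
move=> _ Hsub Hrep phi.
have minE : forall psi, min_solution f psi <-> min_cut c (S_of psi).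
  move=> psi; split.
    move=> Hm; split; first exact: S_of_st.
    move=> S' HS'; have [chi Hchi] := nu_S_of S'.
    apply: (Order.POrderTheory.le_trans _ (Hsub S' HS')).
    by rewrite Hchi !Hrep; apply: Hm.
  move=> [_ Hm] chi; rewrite -!Hrep; apply: Hm; exact: S_of_st.
have normE : forall S, normalised_min_cut c S -> exists psi, S = S_of psi.
  move=> S [[HS _] Hn]; have [psi Hp] := nu_S_of S.
  by exists psi; rewrite -Hp nu_id.
split.
  move=> [Hmin Hnd]; split; first by split; [apply/minE | exact: S_of_norm].
  move=> [S' [HS' Hp]]; have [psi E] := normE S' HS'; subst S'.
  apply: Hnd; exists psi; split; first by apply/minE; exact: HS'.1.
  by apply/domE.
move=> [[Hmc _] Hnd]; split; first by apply/minE.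
move=> [psi [Hm Hd]]; apply: Hnd; exists (S_of psi).
split; first by split; [apply/minE | exact: S_of_norm].
by apply/domE.
Qed.
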